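(* Let $n\ge1$ and $d\ge1$. The space $V^n_d$ of divergence-free vector fields in $F^n_d$ has a basis consisting of (i) the $n\dim P^{n-1}_d$ vector monomials $p_{i,m}=\xi^m\hat e_i$ with $1\le i\le n$, $m\in\mathbb{N}^n$, $|m|=d$ and $m_i=0$; and (ii) the $(n-1)\dim P^n_{d-1}$ vector fields $$v_{i,m}=\xi^m\big[(1+m_{i+1})\,\xi_i\hat e_i-(1+m_i)\,\xi_{i+1}\hat e_{i+1}\big],\qquad 1\le i\le n-1,\ m\in\mathbb{N}^n,\ |m|=d-1 .$$
   Context: For $\xi\in\mathbb{R}^n$ and $m\in\mathbb{N}^n$, $\xi^m=\xi_1^{m_1}\cdots\xi_n^{m_n}$ and $|m|=\sum_i m_i$. $P^n_d$ is the space of real homogeneous polynomials of degree $d$ in $n$ variables (so $\dim P^n_d=\binom{n+d-1}{d}$). $F^n_d$ is the space of vector fields $h:\mathbb{R}^n\to\mathbb{R}^n$ each of whose components lies in $P^n_d$, and $V^n_d=\{v\in F^n_d:\nabla\cdot v=0\}$. $\hat e_i$ is the $i$-th standard basis vector. *)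

(* Defs.v *)
From HB Require Import structures.
From mathcomp Require Import all_boot all_order all_algebra.
From mathcomp.multinomials Require Import mpoly.
Set Implicit Arguments. Unset Strict Implicit. Unset Printing Implicit Defensive.
Import Order.TTheory GRing.Theory Num.Theory.
Local Open Scope ring_scope.

Definition vfield (R : realFieldType) (n : nat) := 'I_n -> {mpoly R[n]}.

Definition inF (R : realFieldType) n d (h : vfield R n) : Prop :=
  forall j : 'I_n, h j \is d.-homog.

Definition divergence (R : realFieldType) n (h : vfield R n) : {mpoly R[n]} :=
  \sum_(j < n) (h j)^`M(j).

Definition inV (R : realFieldType) n d (h : vfield R n) : Prop :=
  inF d h /\ divergence h = 0.

Definition lincomb (R : realFieldType) n (I : finType) (c : I -> R)
  (B : I -> vfield R n) : vfield R n :=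
  fun j => \sum_(k : I) c k *: B k j.

Definition is_basis_of (R : realFieldType) n (P : vfield R n -> Prop)
  (I : finType) (B : I -> vfield R n) : Prop :=
  [/\ forall k, P (B k),
      forall c : I -> R, (forall j, lincomb c B j = 0) -> forall k, c k = 0
    & forall h, P h -> exists c : I -> R, forall j, h j = lincomb c B j].

Definition Ip n d := {x : 'I_n * 'X_{1..n < d.+1} |
  (mdeg (bmnm x.2) == d) && (bmnm x.2 x.1 == 0%N)}.
(* index set (ii): triples (i, i+1, m), |m| = d-1 (i ranges over 1..n-1) *)
Definition Iv n d := {x : 'I_n * 'I_n * 'X_{1..n < d} |
  (val x.1.2 == (val x.1.1).+1) && (mdeg (bmnm x.2) == d.-1)}.

Definition p_field (R : realFieldType) n (i : 'I_n) (m : 'X_{1..n}) : vfield R n :=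
  fun j => if j == i then 'X_[m] else 0.

(* v_{i,m} = xi^m [ (1+m_{i+1}) xi_i e_i - (1+m_i) xi_{i+1} e_{i+1} ],  i' = i+1 *)
Definition v_field (R : realFieldType) n (i i' : 'I_n) (m : 'X_{1..n}) : vfield R n :=
  fun j => if j == i then (1 + m i')%:R *: ('X_[m] * 'X_i)
           else if j == i' then - ((1 + m i)%:R *: ('X_[m] * 'X_i'))
           else 0.

Definition basis_family (R : realFieldType) n d (k : (Ip n d + Iv n d)%type)
  : vfield R n :=
  match k with
  | inl x => p_field R (val x).1 (bmnm (val x).2)
  | inr y => v_field R (val y).1.1 (val y).1.2 (bmnm (val y).2)
  end.

(* Main.v *)
Require Import Defs.
From HB Require Import structures.
From mathcomp Require Import all_boot all_order all_algebra.
From mathcomp.multinomials Require Import mpoly.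
From mathcomp Require Import ring.
Set Implicit Arguments. Unset Strict Implicit. Unset Printing Implicit Defensive.
Import Order.TTheory GRing.Theory Num.Theory.
Local Open Scope ring_scope.

Section S.
Variables (R : realFieldType) (n d : nat).

Lemma coef_p (i : 'I_n) m j M :
  (p_field R i m j)@_M = ((j == i) && (m == M))%:R.
Proof.
rewrite /p_field; case: (j == i) => /=; first by rewrite mcoeffX.
by rewrite mcoeff0.
Qed.

Lemma coef_v (i i' : 'I_n) N j M : i != i' ->
  (v_field R i i' N j)@_M =
  (if (i == j) && ((N + U_(i))%MM == M) then (1 + N i')%:R else 0)
  - (if (i' == j) && ((N + U_(i'))%MM == M) then (1 + N i)%:R else 0).
Proof.
move=> hii; rewrite /v_field.
case: (eqVneq j i) => [e|hij].
  subst j; rewrite ?eqxx [i' == i]eq_sym ?(negbTE hii) /= subr0 mcoeffZ -mpolyXD mcoeffX.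
  by case: eqP => _; rewrite ?mulr1 ?mulr0.
rewrite ?(negbTE hij) ?(negbTE hij) /= ?sub0r.
case: (eqVneq j i') => [e|hij'].
  subst j; rewrite ?eqxx /= mcoeffN mcoeffZ -mpolyXD mcoeffX.
  by case: eqP => _; rewrite ?mulr1 ?mulr0 ?oppr0.
by rewrite ?(negbTE hij') /= oppr0 mcoeff0.
Qed.

Notation B := (@basis_family R n d).

Lemma Iv_neq (y : Iv n d) : (sval y).1.1 != (sval y).1.2.
Proof.
case: y => [[[i i'] m] /= /andP [/eqP h _]].
by apply/negP => /eqP e; move: h; rewrite e; case: (val i') => //= k /eqP; rewrite ltn_eqF.
Qed.

Lemma coef_lincomb (c : Ip n d + Iv n d -> R) j M :
 (lincomb c B j)@_M =
  \sum_(x : Ip n d | ((sval x).1 == j) && (bmnm (sval x).2 == M)) c (inl x)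
  + (\sum_(y : Iv n d | ((sval y).1.1 == j) && ((bmnm (sval y).2 + U_((sval y).1.1))%MM == M))
       c (inr y) * (1 + bmnm (sval y).2 (sval y).1.2)%:R
  - \sum_(y : Iv n d | ((sval y).1.2 == j) && ((bmnm (sval y).2 + U_((sval y).1.2))%MM == M))
       c (inr y) * (1 + bmnm (sval y).2 (sval y).1.1)%:R).
Proof.
rewrite /lincomb raddf_sum big_sumType /=; congr (_ + _).
  rewrite [RHS]big_mkcond /=; apply: eq_bigr => x _.
  rewrite mcoeffZ coef_p [j == _]eq_sym.
  by case: ifP => _; rewrite ?mulr1 ?mulr0.
rewrite [X in _ = X - _]big_mkcond [X in _ = _ - X]big_mkcond -sumrB; apply: eq_bigr => y _.
rewrite mcoeffZ coef_v ?Iv_neq // mulrBr; congr (_ - _).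
  by case: ifP => _; rewrite ?mulr0.
by case: ifP => _; rewrite ?mulr0.
Qed.

Lemma Ip_deg (x : Ip n d) : mdeg (bmnm (sval x).2) = d.
Proof. by case: x => [[i m] /= /andP [/eqP h _]]. Qed.
Lemma Ip_0 (x : Ip n d) : bmnm (sval x).2 (sval x).1 = 0%N.
Proof. by case: x => [[i m] /= /andP [_ /eqP h]]. Qed.
Lemma Iv_deg (y : Iv n d) : mdeg (bmnm (sval y).2) = d.-1.
Proof. by case: y => [[[i i'] m] /= /andP [_ /eqP h]]. Qed.
Lemma Iv_succ (y : Iv n d) : val (sval y).1.2 = (val (sval y).1.1).+1.
Proof. by case: y => [[[i i'] m] /= /andP [/eqP h _]]. Qed.

Lemma B_inF (hd : (1 <= d)%N) k : inF d (B k).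
Proof.
case: k => [x|y] j /=.
  rewrite /p_field; case: ifP => _; last exact: dhomog0.
  by rewrite dhomogX; apply/eqP; apply: Ip_deg.
have hy : mdeg ((bmnm (sval y).2) + U_((sval y).1.1))%MM = d.
  by rewrite mdegD mdeg1 Iv_deg addn1 prednK.
have hy' : mdeg ((bmnm (sval y).2) + U_((sval y).1.2))%MM = d.
  by rewrite mdegD mdeg1 Iv_deg addn1 prednK.
rewrite /v_field; case: ifP => _.
  by apply: dhomogZ; rewrite -mpolyXD dhomogX; apply/eqP; apply: hy.
case: ifP => _; last exact: dhomog0.
by rewrite dhomogN; apply: dhomogZ; rewrite -mpolyXD dhomogX; apply/eqP; apply: hy'.
Qed.

Lemma B_div k : divergence (B k) = 0.
Proof.
case: k => [x|y] /=.
  rewrite /divergence big1 // => j _; rewrite /p_field.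
  case: eqP => [->|_]; last exact: mderiv0.
  by rewrite mderivX Ip_0 scale0r.
have hne := Iv_neq y.
move: hne; set i := (sval y).1.1; set i' := (sval y).1.2; set N := bmnm (sval y).2 => hne.
rewrite /divergence (bigD1 i) // (bigD1 i') 1?eq_sym //= big1 ?addr0; last first.
  move=> j /andP [h1 h2]; rewrite /v_field (negbTE h1) (negbTE h2); exact: mderiv0.
rewrite /v_field eqxx [i' == i]eq_sym (negbTE hne) eqxx.
rewrite mderivN !mderivZ -!mpolyXD !mderivX !mnmDE !mnm1E !eqxx !addmK.
rewrite ?[i' == i]eq_sym ?(negbTE hne) !addn1 !scalerA -scaleNr -scalerDl.
by rewrite -!natrM !add1n mulnC subrr scale0r.
Qed.

Lemma Ip_uniq (x1 x2 : Ip n d) : (sval x1).1 = (sval x2).1 ->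
  bmnm (sval x1).2 = bmnm (sval x2).2 -> x1 = x2.
Proof.
case: x1 x2 => [[i1 m1] p1] [[i2 m2] p2] /= e1 e2; subst i2.
have e : m1 = m2 by apply: val_inj.
subst m2; congr exist; exact: bool_irrelevance.
Qed.

Lemma Iv_uniq (y1 y2 : Iv n d) : (sval y1).1.1 = (sval y2).1.1 ->
  bmnm (sval y1).2 = bmnm (sval y2).2 -> y1 = y2.
Proof.
move=> e1 e2; have e3 : (sval y1).1.2 = (sval y2).1.2.
  by apply: val_inj; rewrite !Iv_succ e1.
move: e1 e2 e3; case: y1 y2 => [[[i1 i1'] m1] p1] [[[i2 i2'] m2] p2] /= e1 e2 e3.
subst i2 i2'; have e : m1 = m2 by apply: val_inj.
subst m2; congr exist; exact: bool_irrelevance.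
Qed.

Lemma Ip_mk (j : 'I_n) (M : 'X_{1..n}) : mdeg M = d -> M j = 0%N ->
  exists x0 : Ip n d, (sval x0).1 = j /\ bmnm (sval x0).2 = M.
Proof.
move=> hM hj; have hb : (mdeg M < d.+1)%N by rewrite hM.
have hx : (mdeg (bmnm (BMultinom hb)) == d) && (bmnm (BMultinom hb) j == 0%N).
  by rewrite /= hM hj !eqxx.
by exists (exist _ (j, BMultinom hb) hx).
Qed.

Lemma Iv_mk (i : nat) (N : 'X_{1..n}) : (1 <= d)%N -> (i.+1 < n)%N -> mdeg N = d.-1 ->
  exists y0 : Iv n d, [/\ val (sval y0).1.1 = i, val (sval y0).1.2 = i.+1
                        & bmnm (sval y0).2 = N].
Proof.
move=> hd hi hN; have hb : (mdeg N < d)%N by rewrite hN prednK.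
have hi' : (i < n)%N by apply: ltn_trans hi.
have hy : (val (Ordinal hi) == (val (Ordinal hi')).+1) && (mdeg (bmnm (BMultinom hb)) == d.-1).
  by rewrite /= hN !eqxx.
by exists (exist _ ((Ordinal hi', Ordinal hi), BMultinom hb) hy).
Qed.

Lemma pred_Ip (x : Ip n d) :
  (fun x' : Ip n d => ((sval x').1 == (sval x).1) && (bmnm (sval x').2 == bmnm (sval x).2)) =1 pred1 x.
Proof.
move=> x' /=; apply/idP/eqP => [/andP [/eqP e1 /eqP e2]|->]; last by rewrite !eqxx.
exact: Ip_uniq.
Qed.

Lemma indep_inl c : (forall j, lincomb c B j = 0) -> forall x, c (inl x) = 0.
Proof.
move=> H x; have := coef_lincomb c (sval x).1 (sval x).2.
rewrite H mcoeff0 (big_pred1 x (pred_Ip x)) !big1 ?subr0 ?addr0 //.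
- move=> y /andP [/eqP e1 /eqP e]; move: (Ip_0 x); rewrite -e -e1 mnmDE mnm1E eqxx addn1 //.
- move=> y /andP [/eqP e1 /eqP e]; move: (Ip_0 x); rewrite -e -e1 mnmDE mnm1E eqxx addn1 //.
Qed.

Lemma indep_step c (y : Iv n d) : (forall j, lincomb c B j = 0) ->
  (forall y' : Iv n d, (sval y').1.2 = (sval y).1.1 -> c (inr y') = 0) -> c (inr y) = 0.
Proof.
move=> H IH; have := coef_lincomb c (sval y).1.1 (bmnm (sval y).2 + U_((sval y).1.1))%MM.
rewrite H mcoeff0 big1; last first.
  move=> x /andP [/eqP e1 /eqP e]; move: (Ip_0 x); rewrite e e1 mnmDE mnm1E eqxx addn1 //.
rewrite [X in _ - X]big1; last first.
  by move=> y' /andP [/eqP e1 _]; rewrite IH ?mul0r.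
rewrite (big_pred1 y); last first.
  move=> y' /=; apply/idP/eqP => [/andP [/eqP e1 /eqP e]|->]; last by rewrite !eqxx.
  apply: Iv_uniq => //; rewrite e1 in e; exact: (can_inj (addmK _)) e.
rewrite add0r subr0 => /esym /eqP; rewrite mulf_eq0 pnatr_eq0 add1n orbF.
by move/eqP.
Qed.

Lemma indep c : (forall j, lincomb c B j = 0) -> forall k, c k = 0.
Proof.
move=> H [x|y]; first exact: indep_inl.
suff: forall k (y : Iv n d), val (sval y).1.1 = k -> c (inr y) = 0 by move=> h; exact: h.
elim => [|k IHk] {}y hy; apply: indep_step => // y' e.
  by move: (Iv_succ y'); rewrite e hy.
apply: IHk; move: (Iv_succ y'); rewrite e hy; by case.
Qed.

Lemma sumS1 (F : Iv n d -> R) (K : R) (j : 'I_n) N : (1 <= d)%N -> mdeg N = d.-1 ->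
  (forall y : Iv n d, (sval y).1.1 = j -> bmnm (sval y).2 = N -> F y = K) ->
  \sum_(y : Iv n d | ((sval y).1.1 == j) && ((bmnm (sval y).2 + U_((sval y).1.1))%MM == (N + U_(j))%MM)) F y
  = if (j.+1 < n)%N then K else 0.
Proof.
move=> hd hN hF; case: ifP => hj.
  have [y0 [e1 e2 e3]] := Iv_mk hd hj hN.
  have e1' : (sval y0).1.1 = j by apply: val_inj.
  rewrite (big_pred1 y0); first exact: hF.
  move=> y /=; apply/idP/eqP => [/andP [/eqP f1 /eqP f]|->]; last by rewrite e1' e3 !eqxx.
  rewrite f1 in f; apply: Iv_uniq; first by rewrite f1 e1'.
  by rewrite e3; exact: (can_inj (addmK _)) f.
rewrite big1 // => y /andP [/eqP f1 _]; move: (Iv_succ y) (ltn_ord (sval y).1.2).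
by rewrite f1 => ->; rewrite hj.
Qed.

Lemma sumS2 (F : Iv n d -> R) (K : R) (j : 'I_n) N : (1 <= d)%N -> mdeg N = d.-1 ->
  (forall y : Iv n d, (sval y).1.2 = j -> bmnm (sval y).2 = N -> F y = K) ->
  \sum_(y : Iv n d | ((sval y).1.2 == j) && ((bmnm (sval y).2 + U_((sval y).1.2))%MM == (N + U_(j))%MM)) F y
  = if (0 < j)%N then K else 0.
Proof.
move=> hd hN hF; case: ifP => hj.
  have hj' : ((val j).-1.+1 < n)%N by rewrite prednK // ltn_ord.
  have [y0 [e1 e2 e3]] := Iv_mk hd hj' hN.
  have e2' : (sval y0).1.2 = j by apply: val_inj; rewrite e2 prednK.
  rewrite (big_pred1 y0); first exact: hF.
  move=> y /=; apply/idP/eqP => [/andP [/eqP f1 /eqP f]|->]; last by rewrite e2' e3 !eqxx.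
  rewrite f1 in f; apply: Iv_uniq.
    by apply: val_inj; apply/succn_inj; rewrite -!Iv_succ f1 e2'.
  by rewrite e3; exact: (can_inj (addmK _)) f.
rewrite big1 // => y /andP [/eqP f1 _]; move: (Iv_succ y).
by rewrite f1 => e; move: hj; rewrite e.
Qed.

Lemma wnz (k : nat) : (1 + k%:R != 0 :> R).
Proof. by rewrite addrC natr1 pnatr_eq0. Qed.

Section Span.
Variable h : vfield R n.
Hypothesis hV : inV d h.
Hypothesis hd : (1 <= d)%N.

Definition aa (k : 'I_n) (N : 'X_{1..n}) := (h k)@_(N + U_(k))%MM.
Definition Us (N : 'X_{1..n}) (i : nat) :=
  \sum_(k < n | (k < i)%N) (1 + N k)%:R * aa k N.

Lemma Us0 N : Us N 0 = 0.
Proof. by rewrite /Us big1. Qed.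

Lemma UsS N (j : 'I_n) : Us N j.+1 = Us N j + (1 + N j)%:R * aa j N.
Proof.
rewrite /Us (bigD1 j) ?ltnSn //= addrC; congr (_ + _).
apply: eq_bigl => k; rewrite ltnS ltn_neqAle andbC.
by case: (eqVneq k j) => [->|hk]; rewrite ?eqxx ?hk.
Qed.

Lemma Usn N : Us N n = 0.
Proof.
have := congr1 (mcoeff N) hV.2; rewrite mcoeff0 /divergence raddf_sum => <-.
rewrite /Us; under eq_bigl do rewrite ltn_ord.
by apply: eq_bigr => k _; rewrite /= mcoeff_deriv mulr_natl add1n.
Qed.

Definition cc (k : Ip n d + Iv n d) : R :=
  match k with
  | inl x => (h (sval x).1)@_(bmnm (sval x).2)
  | inr y => Us (bmnm (sval y).2) (sval y).1.2 /
       ((1 + bmnm (sval y).2 (sval y).1.1)%:R * (1 + bmnm (sval y).2 (sval y).1.2)%:R)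
  end.

Lemma span_eq j : h j = lincomb cc B j.
Proof.
apply/mpolyP => M; rewrite coef_lincomb.
have hF := hV.1 j.
case: (eqVneq (mdeg M) d) => hM; last first.
  have hz : (h j)@_M = 0 := dhomog_nemf_coeff hF hM.
  rewrite hz !big1 ?subr0 ?addr0 //; move=> ? /andP [_ /eqP e]; case/eqP: hM;
    by rewrite -e ?Ip_deg // mdegD mdeg1 Iv_deg addn1 prednK.
case: (eqVneq (M j) 0%N) => hj.
  have [x0 [e1 e2]] := Ip_mk hM hj.
  rewrite (big_pred1 x0); last by move=> x; rewrite -e1 -e2; exact: pred_Ip.
  rewrite !big1 ?subr0 ?addr0 /= ?e1 ?e2 //;
    move=> y /andP [/eqP f1 /eqP f]; move: hj; rewrite -f f1 mnmDE mnm1E eqxx addn1 //.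
pose N := (M - U_(j))%MM.
have eM : M = (N + U_(j))%MM.
  rewrite /N submK //; apply/mnm_lepP => k; rewrite mnm1E.
  by case: eqP => [<-|]; rewrite ?lt0n.
have hN : mdeg N = d.-1 by move: hM; rewrite eM mdegD mdeg1 addn1 => <-.
rewrite big1 ?add0r; last first.
  by move=> x /andP [/eqP e1 /eqP e]; move: (Ip_0 x) hj; rewrite e e1 => ->; rewrite eqxx.
have wj : (1 + N j)%:R != 0 :> R by rewrite pnatr_eq0 add1n.
rewrite eM (sumS1 (K := Us N j.+1 / (1 + N j)%:R) hd hN); last first.
  move=> y e1 e2; rewrite /= e2 e1 Iv_succ e1.
  have w' : (1 + N (sval y).1.2)%:R != 0 :> R by rewrite pnatr_eq0 add1n.
  by field; rewrite !wnz.
rewrite (sumS2 (j := j) (K := Us N j / (1 + N j)%:R) hd hN); last first.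
  move=> y e1 e2; rewrite /= e2 e1.
  have w' : (1 + N (sval y).1.1)%:R != 0 :> R by rewrite pnatr_eq0 add1n.
  by field; rewrite !wnz.
have -> : (if (j.+1 < n)%N then Us N j.+1 / (1 + N j)%:R else 0) = Us N j.+1 / (1 + N j)%:R.
  case: ifP => // hjn; rewrite (_ : j.+1 = n) ?Usn ?mul0r //.
  by apply/eqP; rewrite eqn_leq ltn_ord leqNgt hjn.
have -> : (if (0 < j)%N then Us N j / (1 + N j)%:R else 0) = Us N j / (1 + N j)%:R.
  by case: ifP => //; rewrite lt0n => /negbFE /eqP ->; rewrite Us0 mul0r.
rewrite UsS /aa; field; exact: wnz.
Qed.

End Span.

End S.

Theorem lemma1 (R : realFieldType) (n d : nat) (hn : (1 <= n)%N) (hd : (1 <= d)%N) :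
  is_basis_of (@inV R n d) (@basis_family R n d).
Proof.
split.
- move=> k; split; [exact: (@B_inF R n d hd k) | exact: (@B_div R n d k)].
- exact: (@indep R n d).
- move=> h hV; exists (@cc R n d h) => j; exact: (@span_eq R n d h hV hd j).
Qed.
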